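(* Let $G$ be a connected graph with a universal vertex $v$ (adjacent to all other vertices). Then $v$ is not a basis forced vertex of $G$.
   Context: All graphs are finite and simple. For vertices $u,w$ of a connected graph $G$, $d(u,w)$ is the length of a shortest $u$–$w$ path. A set $R\subseteq V(G)$ is a resolving set if for all distinct $x,y\in V(G)$ there is $r\in R$ with $d(r,x)\neq d(r,y)$. The metric dimension $\dim(G)$ is the minimum cardinality of a resolving set, and a resolving set of cardinality $\dim(G)$ is a metric basis. A vertex is a basis forced vertex if it belongs to every metric basis of $G$. *)

(* Defs.v *)
(* A finite simple graph is a symmetric irreflexive
   relation e on a finType T. *)
From mathcomp Require Import all_boot.
Set Implicit Arguments. Unset Strict Implicit. Unset Printing Implicit Defensive.

Section MetricDim.
Variables (T : finType) (e : rel T).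

Definition walkb (n : nat) (u w : T) : bool :=
  [exists p : n.-tuple T, path e u p && (last u p == w)].

Definition gconnected : Prop := forall u w : T, connect e u w.

(* distance = least length of a u-w walk (= shortest path length).
   In a connected graph such a length is < #|T|; the default #|T| is
   never reached for connected graphs. *)
Definition dist (u w : T) : nat := find (fun n => walkb n u w) (iota 0 #|T|).

Definition resolving (R : {set T}) : bool :=
  [forall x : T, forall y : T,
     (x != y) ==> [exists r in R, dist r x != dist r y]].

(* metric dimension: minimum cardinality of a resolving set
   (the full vertex set is always resolving, so #|T| is a valid default). *)
Definition metric_dim : nat :=
  \big[minn/#|T|]_(S : {set T} | resolving S) #|S|.

Definition metric_basis (B : {set T}) : Prop :=
  resolving B /\ #|B| = metric_dim.

Definition basis_forced (v : T) : Prop :=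
  forall B : {set T}, metric_basis B -> v \in B.

End MetricDim.

(* Main.v *)
Require Import Defs.
From mathcomp Require Import all_boot.
Set Implicit Arguments. Unset Strict Implicit.

Lemma bigmin_seq_le (I : eqType) (r : seq I) (P : pred I) (F : I -> nat) d i :
  i \in r -> P i -> \big[minn/d]_(j <- r | P j) F j <= F i.
Proof.
elim: r => // a r IH; rewrite inE big_cons => /orP [/eqP <- | ir] Pi.
  by rewrite Pi geq_minl.
case: (P a); last exact: IH.
by apply: leq_trans (geq_minr _ _) (IH ir Pi).
Qed.

Lemma md_le (T : finType) (e : rel T) (S : {set T}) :
  resolving e S -> metric_dim e <= #|S|.
Proof.
move=> RS; rewrite /metric_dim.
by apply: bigmin_seq_le => //; rewrite mem_index_enum.
Qed.

Lemma walk0 (T : finType) (e : rel T) u w : walkb e 0 u w = (u == w).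
Proof.
apply/existsP/idP.
  by case=> p; rewrite (tuple0 p) /=.
by move=> H; exists [tuple]; rewrite /= H.
Qed.

Lemma dist0 (T : finType) (e : rel T) u w : (dist e u w == 0) = (u == w).
Proof.
have h : 0 < #|T| by apply/card_gt0P; exists u.
rewrite /dist; case: #|T| h => // n _ /=.
by rewrite walk0; case: (u == w).
Qed.

Lemma dist1 (T : finType) (e : rel T) v x : x != v -> e v x -> dist e v x = 1.
Proof.
move=> xv evx.
have h : 1 < #|T|.
  rewrite (cardD1 v) (cardD1 x) !inE xv /=. by [].
rewrite /dist; case: #|T| h => // [[|n]] // _ /=.
rewrite walk0 eq_sym (negbTE xv).
have -> : walkb e 1 v x by apply/existsP; exists [tuple x]; rewrite /= evx eqxx.
by [].
Qed.

Lemma resP (T : finType) (e : rel T) (S : {set T}) :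
  (forall x y, x != y -> exists2 r, r \in S & dist e r x != dist e r y) ->
  resolving e S.
Proof.
move=> H; apply/forallP => x; apply/forallP => y; apply/implyP => xy.
by have [r rS hr] := H x y xy; apply/existsP; exists r; rewrite rS.
Qed.

Lemma resE (T : finType) (e : rel T) (S : {set T}) x y :
  resolving e S -> x != y -> exists2 r, r \in S & dist e r x != dist e r y.
Proof.
move=> /forallP/(_ x)/forallP/(_ y)/implyP H /H/existsP [r /andP [rS hr]].
by exists r.
Qed.

Theorem lemma4 (T : finType) (e : rel T) (v : T) :
  symmetric e -> irreflexive e -> gconnected e ->
  (forall w : T, w != v -> e v w) ->
  ~ basis_forced e v.
Proof.
move=> _ _ _ univ BF.
have dv : forall x, x != v -> dist e v x = 1 by move=> x xv; apply: dist1 => //; apply: univ.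
have d0 : forall x y, (dist e x y == 0) = (x == y) by move=> x y; apply: dist0.
have dxx : forall x, dist e x x = 0 by move=> x; apply/eqP; rewrite d0.
have [B [RB cB]] : exists B, metric_basis e B.
  have [S [RS PS]] : exists S : {set T}, resolving e S /\ #|S| = metric_dim e.
    rewrite /metric_dim; elim/big_rec: _ => [|S x RS [S0 [R0 E0]]].
      exists setT; split; last exact: cardsT.
      apply: resP => x y xy; exists x; rewrite ?in_setT //.
      by rewrite dxx eq_sym d0.
    rewrite /minn; case: ltnP => _; first by exists S.
    by exists S0.
  by exists S.
have vB : v \in B by apply: BF.
set B1 := B :\ v.
pose tw y := [forall r in B1, dist e r y == dist e r v].
have uniq_tw : forall x y, x != v -> y != v -> x != y -> tw x -> tw y -> False.
  move=> x y xv yv xy /forall_inP tx /forall_inP ty.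
  have [r rB] := resE RB xy; apply/negP/negPn.
  case: (eqVneq r v) => [->|rv]; first by rewrite !dv.
  have rB1 : r \in B1 by rewrite !inE rv.
  by rewrite (eqP (tx r rB1)) (eqP (ty r rB1)).
have P1 : forall x y, x != v -> y != v -> x != y ->
    exists2 r, r \in B1 & dist e r x != dist e r y.
  move=> x y xv yv xy; have [r rB hr] := resE RB xy.
  case: (eqVneq r v) => [rv|rv]; first by move: hr; rewrite rv !dv.
  by exists r => //; rewrite !inE rv.
have P2 : forall y, y != v -> ~~ tw y ->
    exists2 r, r \in B1 & dist e r v != dist e r y.
  move=> y yv /forall_inPn [r rB1 hr]; exists r => //; by rewrite eq_sym.
have cardB : #|B| = (#|B1|).+1 by rewrite (cardsD1 v B) vB.
case: (boolP [exists x, (x != v) && tw x]) => [/existsP [x0 /andP [x0v tx0]]|notw].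
  have x0B1 : x0 \notin B1.
    apply/negP => x0B1; move: tx0 => /forall_inP/(_ x0 x0B1).
    by rewrite dxx eq_sym d0 (negbTE x0v).
  have RB' : resolving e (x0 |: B1).
    apply: resP => x y xy.
    have Hv : forall y, y != v -> exists2 r, r \in x0 |: B1 & dist e r v != dist e r y.
      move=> z zv; case: (eqVneq z x0) => [->|zx0].
        by exists x0; [rewrite setU11 | rewrite dxx d0].
      have ntz : ~~ tw z by apply/negP => tz; apply: (uniq_tw z x0).
      have [r rB1 hr] := P2 z zv ntz; exists r => //; by rewrite setU1r.
    case: (eqVneq x v) xy => [->|xv] xy; first by apply: Hv; rewrite eq_sym.
    case: (eqVneq y v) => [yv|yv].
      have [r rB hr] := Hv x xv; exists r => //; by rewrite yv eq_sym.
    have [r rB1 hr] := P1 x y xv yv xy; exists r => //; by rewrite setU1r.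
  have M : metric_basis e (x0 |: B1).
    by split => //; rewrite cardsU1 x0B1 add1n -cardB cB.
  have := BF _ M.
  by case/setU1P => [vx0|]; [rewrite vx0 eqxx in x0v | rewrite !inE eqxx].
have RB1 : resolving e B1.
  apply: resP => x y xy.
  case: (eqVneq x v) xy => [->|xv] xy.
    have yv : y != v by rewrite eq_sym.
    apply: P2 => //.
    by apply/negP => ty; move/existsP: notw; apply; exists y; rewrite ty yv.
  case: (eqVneq y v) => [->|yv]; last exact: P1.
  have [r rB hr] : exists2 r, r \in B1 & dist e r v != dist e r x.
    apply: P2 => //; apply/negP => tx; move/existsP: notw; apply; exists x; by rewrite tx xv.
  by exists r => //; rewrite eq_sym.
have := md_le RB1; rewrite -cB cardB ltnn.
by [].
Qed.
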